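(* Let $q>0$, $q\neq1$, $\nu,t\in\mathbb{R}$. For every integer $N\ge0$, $$H_N(x,\nu t;q)=e^{\nu tD_x^2}x^N,$$ where $e^{aD_x^2}:=\sum_{n\ge0}\frac{a^n}{n!}D_x^{2n}$ (a finite sum on polynomials). In particular $\phi(x,t)=e^{\nu tD_x^2}x^N$ solves $\partial_t\phi-\nu D_x^2\phi=0$ with $\phi(x,0)=x^N$.
   Context: For $n\ge 0$ let $[n]_q=\frac{q^n-1}{q-1}$, $[0]_q!=1$, $[n]_q!=[1]_q\cdots[n]_q$, and $e_q(z)=\sum_{n\ge0}z^n/[n]_q!$. The $q$-derivative acts by $D_x x^n=[n]_qx^{n-1}$ (equivalently $D_xf(x)=\frac{f(qx)-f(x)}{(q-1)x}$). The $q$-Hermite polynomials $H_N(y;q)$ are defined by $e^{-s^2}e_q([2]_q s y)=\sum_{N\ge0}H_N(y;q)\,s^N/[N]_q!$ (formal power series in $s$), and the $q$-Kampe-de Feriet polynomials by $H_N(x,\nu t;q)=(-\nu t)^{N/2}H_N\big(\tfrac{x}{[2]_q\sqrt{-\nu t}};q\big)$, understood as the resulting polynomial in $x$ and $\nu t$. *)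

(* Defs.v *)
From HB Require Import structures.
From mathcomp Require Import all_boot all_order all_algebra.
From mathcomp Require Import all_classical all_reals all_analysis.
Set Implicit Arguments. Unset Strict Implicit. Unset Printing Implicit Defensive.
Import Order.TTheory GRing.Theory Num.Theory.
Local Open Scope ring_scope.

Section QDefs.
Variable R : realType.
Variable q : R.

Definition qint (n : nat) : R := (q ^+ n - 1) / (q - 1).

Definition qfact (n : nat) : R := \prod_(i < n) qint i.+1.

(* The q-Hermite polynomial H_N(y;q): N-th coefficient of the formal power
   series in s  e^{-s^2} e_q([2]_q s y) = (sum_j (-s^2)^j/j!)(sum_m ([2]_q s y)^m/[m]_q!),
   times [N]_q!  (Cauchy product: pairs (j,m) with 2j + m = N). *)
Definition qhermite (N : nat) : {poly R} :=
  qfact N *: \sum_(j < N.+1) \sum_(m < N.+1 | (2 * j + m)%N == N)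
     (((-1) ^+ j / (j`!)%:R) * (qint 2) ^+ m / qfact m) *: 'X^m.

(* The q-Kampe-de Feriet polynomial H_N(x, a; q) with a = nu t:
   (-a)^{N/2} H_N(x / ([2]_q sqrt(-a)); q), written out as the resulting
   polynomial: coefficient c_j of y^j contributes c_j [2]_q^{-j} x^j (-a)^{(N-j)/2}.
   Only terms with N - j even are kept here; the theorem separately asserts that
   the terms with N - j odd vanish (so nothing is lost). *)
Definition qKdF (N : nat) (x a : R) : R :=
  \sum_(j < size (qhermite N) | ~~ odd (N - j))
     (qhermite N)`_j * (qint 2) ^- j * x ^+ j * (- a) ^+ ((N - j)./2).

(* q-derivative on polynomials: D_x x^n = [n]_q x^{n-1}. *)
Definition qD (p : {poly R}) : {poly R} :=
  \poly_(i < (size p).-1) (qint i.+1 * p`_i.+1).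

(* e^{a D_x^2} p = sum_{n>=0} a^n/n! D_x^{2n} p; the terms with n >= size p
   vanish since D_x lowers the degree, so the sum is taken over n < size p. *)
Definition expqD2 (a : R) (p : {poly R}) : {poly R} :=
  \sum_(n < size p) (a ^+ n / (n`!)%:R) *: iter (2 * n) qD p.

End QDefs.

(* Main.v *)
Require Import Defs.
From HB Require Import structures.
From mathcomp Require Import all_boot all_order all_algebra.
From mathcomp Require Import all_classical all_reals all_analysis.
From mathcomp Require Import ring zify.
From Stdlib Require Import Lia.
Import Order.TTheory GRing.Theory Num.Theory.
Local Open Scope ring_scope.

Section L.
Variable R : realType.
Variable q : R.

Lemma coef_qD (p : {poly R}) i : (qD q p)`_i = qint q i.+1 * p`_i.+1.
Proof.
rewrite /qD coef_poly; case: ifP => // /negbT; rewrite -leqNgt => h.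
rewrite nth_default ?mulr0 //; move: h; case: (size p) => //= n h; lia.
Qed.

Lemma qint0 : qint q 0 = 0.
Proof. by rewrite /qint expr0 subrr mul0r. Qed.

Lemma qD_sum I (r : seq I) (P : pred I) (F : I -> {poly R}) :
  qD q (\sum_(i <- r | P i) F i) = \sum_(i <- r | P i) qD q (F i).
Proof.
apply/polyP => i; rewrite coef_qD !coef_sum mulr_sumr.
by apply: eq_bigr => j _; rewrite coef_qD.
Qed.

Lemma qDZ (c : R) (p : {poly R}) : qD q (c *: p) = c *: qD q p.
Proof. by apply/polyP => i; rewrite coef_qD !coefZ coef_qD mulrCA. Qed.

Lemma qD_Xn (c : R) m : qD q (c *: 'X^m) = (c * qint q m) *: 'X^(m.-1).
Proof.
apply/polyP => i; rewrite coef_qD !coefZ !coefXn.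
case: m => [|m] /=; first by rewrite qint0 !mulr0 mul0r.
rewrite eqSS; case: eqP => [->|_]; by rewrite ?mulr1 ?mulr0 // mulrC.
Qed.

Definition Ff N k := \prod_(i < k) qint q (N - i).

Lemma iter_qD N k : iter k (qD q) 'X^N = Ff N k *: 'X^(N - k).
Proof.
elim: k => [|k IH]; first by rewrite /Ff big_ord0 scale1r subn0.
by rewrite iterS IH qD_Xn /Ff big_ord_recr /= subnS.
Qed.

Lemma expqD2_Xn a N : expqD2 q a 'X^N =
  \sum_(n < N.+1) (a ^+ n / (n`!)%:R * Ff N (2 * n)) *: 'X^(N - 2 * n).
Proof.
rewrite /expqD2 size_polyXn; apply: eq_bigr => n _.
by rewrite iter_qD scalerA.
Qed.

Lemma Ff_big N k : (N < k)%N -> Ff N k = 0.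
Proof.
move=> h; rewrite /Ff (bigD1 (Ordinal h)) //= subnn qint0 mul0r //.
Qed.

Lemma qfact_split N k : (k <= N)%N -> qfact q N = qfact q (N - k) * Ff N k.
Proof.
elim: k => [|k IH] h; first by rewrite /Ff big_ord0 subn0 mulr1.
rewrite IH ?(ltnW h) // /Ff big_ord_recr /=.
have -> : (N - k = (N - k.+1).+1)%N by lia.
rewrite [qfact q (_.+1)]/qfact big_ord_recr /= -/(qfact q _) -!mulrA.
by rewrite /qint; ring.
Qed.

Hypothesis q0 : 0 < q.
Hypothesis q1 : q != 1.

Lemma qint_neq0 n : (0 < n)%N -> qint q n != 0.
Proof.
move=> hn; rewrite /qint mulf_neq0 // ?invr_eq0 subr_eq0 ?pexpr_eq1 // ltW //.
Qed.

Lemma qfact_neq0 n : qfact q n != 0.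
Proof. by rewrite /qfact; apply/prodf_neq0 => i _; apply: qint_neq0. Qed.

Lemma qint2 : qint q 2 = 1 + q.
Proof.
rewrite /qint; have h : q - 1 != 0 by rewrite subr_eq0.
by field.
Qed.

Lemma qint2_neq0 : qint q 2 != 0.
Proof. by rewrite qint2 gt_eqF // addr_gt0. Qed.


Definition Acoef j m := (-1) ^+ j / (j`!)%:R * qint q 2 ^+ m / qfact q m.

Lemma coef_herm N i : (qhermite q N)`_i = qfact q N *
  \sum_(j < N.+1) \sum_(m < N.+1 | (2 * j + m)%N == N) Acoef j m * (i == m)%:R.
Proof.
rewrite /qhermite coefZ coef_sum; congr (_ * _); apply: eq_bigr => j _.
by rewrite coef_sum; apply: eq_bigr => m _; rewrite coefZ coefXn.
Qed.

Lemma herm_odd N j : odd (N - j) -> (qhermite q N)`_j = 0.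
Proof.
move=> ho; rewrite coef_herm big1 ?mulr0 // => k _; apply: big1 => m /eqP hm.
case: eqP => [hjm|]; last by rewrite mulr0.
move: ho; have -> : (N - j = 2 * k)%N by lia.
by rewrite oddM.
Qed.

Lemma herm_size N : (size (qhermite q N) <= N.+1)%N.
Proof.
apply/leq_sizeP => i hi; rewrite coef_herm big1 ?mulr0 // => k _.
apply: big1 => m _; have hm := ltn_ord m.
have -> : (i == m) = false by apply/eqP; lia.
by rewrite mulr0.
Qed.

Lemma fact_neq0 n : (n`!)%:R != 0 :> R.
Proof. by rewrite pnatr_eq0 -lt0n fact_gt0. Qed.

Lemma qKdF_eq N x a : qKdF q N x a = (expqD2 q a 'X^N).[x].
Proof.
set p := qhermite q N.
set W := fun j : nat => qint q 2 ^- j * x ^+ j * (- a) ^+ ((N - j)./2).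
have -> : qKdF q N x a = \sum_(j < size p | ~~ odd (N - j)) p`_j * W j.
  by apply: eq_bigr => j _; rewrite /W !mulrA.
rewrite (big_ord_widen_cond _ (fun j => ~~ odd (N - j)) (fun j => p`_j * W j) (herm_size N)).
have -> : \sum_(j < N.+1 | ~~ odd (N - j) && (j < size p)%N) p`_j * W j =
          \sum_(j < N.+1 | ~~ odd (N - j)) p`_j * W j.
  rewrite [LHS]big_mkcond [RHS]big_mkcond; apply: eq_bigr => j _.
  case: (ltnP j (size p)) => hj; rewrite ?andbT ?andbF //.
  by case: ifP => // _; rewrite nth_default // mul0r.
have -> : \sum_(j < N.+1 | ~~ odd (N - j)) p`_j * W j =
   \sum_(j < N.+1 | ~~ odd (N - j)) \sum_(k < N.+1)
      \sum_(m < N.+1 | (2 * k + m)%N == N)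
         (qfact q N * Acoef k m * W m) * (j == m :> nat)%:R.
  apply: eq_bigr => j _; rewrite coef_herm mulr_sumr mulr_suml.
  apply: eq_bigr => k _; rewrite mulr_sumr mulr_suml; apply: eq_bigr => m _.
  by case: eqP => [->|_]; rewrite ?mulr1 ?mulr0 ?mul0r // mulrA.
rewrite exchange_big /=.
rewrite expqD2_Xn horner_sum; apply: eq_bigr => k _.
rewrite exchange_big /=.
have -> : \sum_(m < N.+1 | (2 * k + m)%N == N)
     \sum_(j < N.+1 | ~~ odd (N - j)) qfact q N * Acoef k m * W m * (j == m :> nat)%:R
   = \sum_(m < N.+1 | (2 * k + m)%N == N) qfact q N * Acoef k m * W m.
  apply: eq_bigr => m /eqP hm; rewrite -mulr_sumr (bigD1 m) /=; last first.
    have -> : (N - m = 2 * k)%N by lia.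
    by rewrite oddM.
  rewrite eqxx big1 ?addr0 ?mulr1 // => j /andP [_ hj].
  by have -> : (j == m :> nat) = false by apply/negbTE.
rewrite hornerZ hornerXn.
case: (leqP (2 * k) N) => hk; last first.
  rewrite big_pred0 ?Ff_big ?mulr0 ?mul0r // => m; apply/eqP; lia.
have hmN : (N - 2 * k < N.+1)%N by lia.
rewrite (big_pred1 (Ordinal hmN)) /=; last first.
  by move=> m; rewrite /= -val_eqE /=; apply/eqP/eqP; lia.
rewrite /W /Acoef (@qfact_split N (2 * k) hk).
have -> : ((N - (N - 2 * k))./2 = k)%N.
  by rewrite subKn // mul2n doubleK.
set m := (N - 2 * k)%N.
have e : (-1) ^+ k * (-1) ^+ k = 1 :> R by rewrite -exprMn mulrNN mulr1 expr1n.
rewrite [(- a) ^+ k]exprNn.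
have -> : a ^+ k / (k`!)%:R * Ff N (2 * k) * x ^+ m =
   a ^+ k / (k`!)%:R * Ff N (2 * k) * x ^+ m * ((-1) ^+ k * (-1) ^+ k) by rewrite e mulr1.
have h1 := qfact_neq0 m; have h2 := fact_neq0 k.
have h3 : qint q 2 ^+ m != 0 by rewrite expf_neq0 // qint2_neq0.
by field; rewrite h1 h2 h3.
Qed.


Lemma deriv_part (nu : R) (N : nat) (x s : R) :
  is_derive s 1 (fun s' : R => (expqD2 q (nu * s') 'X^N).[x])
       (nu * (qD q (qD q (expqD2 q (nu * s) 'X^N))).[x]).
Proof.
set P := fun n : nat => Ff N (2 * n) * x ^+ (N - 2 * n).
set Q : {poly R} := \sum_(n < N.+1) (nu ^+ n / (n`!)%:R * P n) *: 'X^n.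
have -> : (fun s' : R => (expqD2 q (nu * s') 'X^N).[x]) = horner Q.
  apply/funext => s'; rewrite expqD2_Xn /Q !horner_sum; apply: eq_bigr => n _.
  by rewrite !hornerZ !hornerXn /P exprMn; ring.
suff -> : nu * (qD q (qD q (expqD2 q (nu * s) 'X^N))).[x] = Q^`().[s].
  exact: is_derive_poly.
rewrite /Q linear_sum horner_sum big_ord_recl /= derivZ derivXn mulr0n scaler0 horner0 add0r.
rewrite /expqD2 size_polyXn !qD_sum horner_sum mulr_sumr big_ord_recr /=.
have hi : forall n, qD q (qD q ((nu * s) ^+ n / (n`!)%:R *: iter (2 * n) (qD q) 'X^N))
   = ((nu * s) ^+ n / (n`!)%:R) *: (Ff N (2 * n.+1) *: 'X^(N - 2 * n.+1)).
  move=> n; rewrite !qDZ -iter_qD; congr (_ *: _).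
  by have -> : (2 * n.+1 = (2 * n).+2)%N by lia.
rewrite hi Ff_big ?scale0r ?scaler0 ?horner0 ?mulr0 ?addr0; last by lia.
apply: eq_bigr => i _; rewrite hi derivZ derivXn !hornerZ hornerMn !hornerXn /P /=.
rewrite factS natrM exprMn.
have h1 := fact_neq0 i.
have h2 : (i.+1)%:R != 0 :> R by rewrite pnatr_eq0.
rewrite -mulr_natr exprS.
rewrite /bump /= add1n add0n -mulr_natr. by field; rewrite h1 addrC natr1 h2.
Qed.

Lemma init_part N x : (expqD2 q 0 'X^N).[x] = x ^+ N.
Proof.
rewrite expqD2_Xn big_ord_recl big1 ?addr0 /=.
  by rewrite hornerZ hornerXn expr0 /Ff big_ord0 subn0 fact0 invr1 !mul1r.
by move=> i _; rewrite expr0n /= !mul0r scale0r.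
Qed.

End L.

Theorem mainTheorem11 (R : realType) (q nu t : R) (N : nat) :
  0 < q -> q != 1 ->
  (forall j : nat, odd (N - j) -> (qhermite q N)`_j = 0) /\
  (forall x : R, qKdF q N x (nu * t) = (expqD2 q (nu * t) 'X^N).[x]) /\
  (forall x s : R,
     is_derive s 1 (fun s' : R => (expqD2 q (nu * s') 'X^N).[x])
       (nu * (qD q (qD q (expqD2 q (nu * s) 'X^N))).[x])) /\
  (forall x : R, (expqD2 q (nu * 0) 'X^N).[x] = x ^+ N).
Proof.
move=> q0 q1; split; first exact: herm_odd.
split; first by move=> x; apply: qKdF_eq.
split; first by move=> x s; apply: deriv_part.
by move=> x; rewrite mulr0 init_part.
Qed.
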